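(* If $M'$ is a minor of a finite matroid $M$, then $\mathrm{bd}(M')\le\mathrm{bd}(M)$.
   Context: For a rooted tree $T$, $\|T\|$ is its number of edges and its depth is the number of edges of a longest root-to-leaf path. A depth-decomposition of a finite matroid $M$ (rank function $r$) is a pair $(T,f)$ with $T$ a rooted tree and $f:M\to V(T)$ such that (1) $r(M)=\|T\|$ and (2) $r(X)\le\|T^*(X)\|$ for every $X\subseteq M$, where $T^*(X)$ is the union of the paths from the root to all vertices of $f(X)$. The branch-depth $\mathrm{bd}(M)$ is the minimum depth of $T$ over all depth-decompositions $(T,f)$ of $M$. *)

(* Defs.v *)
From Stdlib Require Import ClassicalEpsilon.
From HB Require Import structures.
From mathcomp Require Import all_boot.

Set Implicit Arguments.
Unset Strict Implicit.
Unset Printing Implicit Defensive.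

(* Finite matroids, given by a rank function.  All matroids live over  *)
(* a fixed finite carrier type E; the matroid itself has ground set    *)
(* [ground M] (a subset of E) and rank function [rk M], whose values   *)
(* are only meaningful on subsets of the ground set.                   *)
Record matroid (E : finType) := Matroid {
  ground : {set E};
  rk : {set E} -> nat;
  rk_card : forall X : {set E}, X \subset ground -> rk X <= #|X|;
  rk_mono : forall X Y : {set E}, Y \subset ground -> X \subset Y -> rk X <= rk Y;
  rk_submod : forall X Y : {set E}, X \subset ground -> Y \subset ground ->
                rk (X :|: Y) + rk (X :&: Y) <= rk X + rk Y
}.

(* M' is a minor of M : M' = (M / C) \ D with C, D disjoint subsets of
   the ground set of M, D = ground M - ground M' - C; the rank of the
   contraction M / C is X |-> r(X u C) - r(C). *)
Definition is_minor (E : finType) (M' M : matroid E) : Prop :=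
  ground M' \subset ground M /\
  exists C : {set E}, C \subset ground M :\: ground M' /\
    forall X : {set E}, X \subset ground M' -> rk M' X = rk M (X :|: C) - rk M C.

(* iterating the parent map.  The edges are {v, parent v}, v <> root.  *)
Record rtree (V : finType) := RTree {
  troot : V;
  tpar : V -> V;
  tpar_root : tpar troot = troot;
  treach : forall v, fconnect tpar v troot
}.

(* ||T|| : number of edges = number of non-root vertices *)
Definition tedges (V : finType) (T : rtree V) : nat :=
  #|[set v | v != troot T]|.

Definition tdist (V : finType) (T : rtree V) (v : V) : nat :=
  findex (tpar T) v (troot T).

Definition tdepth (V : finType) (T : rtree V) : nat :=
  \max_(v : V) tdist T v.

(* ||T^*(X)|| : number of edges of the union of the root paths to the
   vertices of f(X), i.e. number of non-root vertices that are ancestors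
   (or equal to) some f x, x in X. *)
Definition tstar_edges (E V : finType) (T : rtree V) (f : E -> V)
    (X : {set E}) : nat :=
  #|[set u | (u != troot T) && [exists x in X, fconnect (tpar T) (f x) u]]|.

Definition depth_decomposition (E V : finType) (M : matroid E)
    (T : rtree V) (f : E -> V) : Prop :=
  rk M (ground M) = tedges T /\
  forall X : {set E}, X \subset ground M -> rk M X <= tstar_edges T f X.

Definition has_dd_of_depth (E : finType) (M : matroid E) (k : nat) : Prop :=
  exists (V : finType) (T : rtree V) (f : E -> V),
    depth_decomposition M T f /\ tdepth T = k.

Definition asbool (P : Prop) : bool :=
  if excluded_middle_informative P then true else false.

Lemma asboolP (P : Prop) : reflect P (asbool P).
Proof.
rewrite /asbool; case: excluded_middle_informative => H; by constructor.
Qed.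

(* Existence of a depth-decomposition (a path of length r(M)). *)
Lemma dd_exists (E : finType) (M : matroid E) :
  exists k, asbool (has_dd_of_depth M k).
Proof.
set r := rk M (ground M).
pose par (i : 'I_r.+1) : 'I_r.+1 := inord i.-1.
have iterP (i : 'I_r.+1) k : val (iter k par i) = i - k.
  elim: k => [|k IH] /=; first by rewrite subn0.
  rewrite /par inordK; first by rewrite IH subnS.
  exact: leq_ltn_trans (leq_pred _) (ltn_ord _).
have par0 : par ord0 = ord0 by apply: val_inj; rewrite /par /= inordK.
have reach v : fconnect par v ord0.
  have -> : ord0 = iter v par v by apply: val_inj; rewrite iterP subnn.
  exact: fconnect_iter.
pose T := RTree par0 reach.
pose f := fun _ : E => (ord_max : 'I_r.+1).
have Hed : [set v | v != troot T] = [set~ ord0].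
  by apply/setP => v; rewrite !inE.
exists (tdepth T); apply/asboolP; exists 'I_r.+1, T, f; split => //; split.
  by rewrite /tedges Hed cardsC1 card_ord.
move=> X HX; have [-> | [x Hx]] := set_0Vmem X.
  by apply: leq_trans (rk_card (sub0set _)) _; rewrite cards0.
have -> : tstar_edges T f X = r.
  apply: eq_trans (_ : #|[set~ (ord0 : 'I_r.+1)]| = r); last first.
    by rewrite cardsC1 card_ord.
  rewrite /tstar_edges; apply: eq_card => u; rewrite !inE.
  case: eqP => //= _; apply/existsP; exists x; rewrite Hx /=.
  have -> : u = iter (r - u) par ord_max.
    by apply: val_inj; rewrite iterP /= subKn // -ltnS.
  exact: fconnect_iter.
exact: rk_mono (subxx _) HX.
Qed.

Definition bd (E : finType) (M : matroid E) : nat := ex_minn (dd_exists M).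

(* Main.v *)
Require Import Defs.
From HB Require Import structures.
From mathcomp Require Import all_boot.
Set Implicit Arguments.
Unset Strict Implicit.
Unset Printing Implicit Defensive.

Lemma findex_le (V : finType) (f : V -> V) x y m :
  iter m f x = y -> findex f x y <= m.
Proof.
move=> Hm; have Hc : fconnect f x y by rewrite -Hm fconnect_iter.
case: (ltnP m (order f x)) => Hmo.
  by rewrite -Hm findex_iter.
exact: ltnW (leq_trans (findex_max Hc) Hmo).
Qed.

Definition Anc (E V : finType) (T : rtree V) (f : E -> V) (X : {set E}) :=
  [set u | (u != troot T) && [exists x in X, fconnect (tpar T) (f x) u]].

Lemma tstarE (E V : finType) (T : rtree V) (f : E -> V) X :
  tstar_edges T f X = #|Anc T f X|.
Proof. by []. Qed.

Section Contract.
Variables (E V : finType) (T : rtree V) (f : E -> V) (v : V).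
Hypothesis hv : v != troot T.
Let p := tpar T.
Let r0 := troot T.

Lemma iter_fix_root n : iter n p r0 = r0.
Proof. by elim: n => //= n ->; exact: tpar_root. Qed.

Lemma pv_neq : p v != v.
Proof.
apply/eqP => Hpv; move/eqP: hv; apply.
have H : forall n, iter n p v = v by elim=> //= n ->.
by rewrite -(iter_findex (treach T v)) H.
Qed.

Definition g x := if x == v then p v else x.
Definition q x := g (p x).

Lemma g_neq x : g x != v.
Proof. rewrite /g; case: (eqVneq x v) => [_|//]; exact: pv_neq. Qed.

Lemma r0_neq : r0 != v. Proof. by rewrite eq_sym. Qed.

Lemma lemA n : forall x y, x != v -> iter n p x = y -> y != v ->
  exists2 m, m <= n & iter m q x = y.
Proof.
elim: n {-2}n (leqnn n) => [|N IH] n Hn x y Hx.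
  by move: Hn; rewrite leqn0 => /eqP -> /= <-; exists 0.
case: n Hn => [_ /= <- _|n Hn]; first by exists 0.
rewrite iterSr => Hit Hy.
case: (eqVneq (p x) v) => Hpx.
  case: n Hn Hit => [_ /=|n Hn]; first by move=> E0; move: Hy; rewrite -E0 Hpx eqxx.
  rewrite iterSr Hpx => Hit.
  have [m Hm Hi] := IH n (leq_trans (leqnSn n) Hn) (p v) y pv_neq Hit Hy.
  exists m.+1; first by rewrite ltnS (leq_trans Hm).
  by rewrite iterSr /q /g Hpx eqxx.
have [m Hm Hi] := IH n Hn (p x) y Hpx Hit Hy.
exists m.+1 => //; by rewrite iterSr /q /g (negbTE Hpx).
Qed.

Lemma fcon_q x : fconnect p x (q x).
Proof.
rewrite /q /g; case: (eqVneq (p x) v) => [<-|_]; last exact: fconnect1.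
apply: connect_trans (fconnect1 _ _) (fconnect1 _ _).
Qed.

Lemma lemB m x : fconnect p x (iter m q x).
Proof.
elim: m x => [x|m IH x]; first exact: connect0.
rewrite iterSr; apply: connect_trans (fcon_q x) (IH _).
Qed.

Lemma lemC x w : w != v -> fconnect p x w = fconnect p (g x) w.
Proof.
move=> Hw; rewrite /g; case: (eqVneq x v) => [->|//].
by rewrite fconnect_eqVf eq_sym (negbTE Hw).
Qed.

Definition V' := {u : V | u != v}.
Definition root' : V' := Sub r0 r0_neq.
Definition par' (u : V') : V' := Sub (q (val u)) (g_neq _).
Definition f' (x : E) : V' := Sub (g (f x)) (g_neq _).

Lemma par'_root : par' root' = root'.
Proof.
apply: val_inj => /=; rewrite /q /r0 /p tpar_root /g.
by rewrite eq_sym (negbTE hv).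
Qed.

Lemma val_iter n u : val (iter n par' u) = iter n q (val u).
Proof. by elim: n => //= n ->. Qed.

Lemma lemD u w : fconnect par' u w = fconnect p (val u) (val w).
Proof.
apply/idP/idP.
  by move/iter_findex => H; rewrite -H val_iter; exact: lemB.
move/iter_findex => H; have [m _ Hm] := lemA (valP u) H (valP w).
have -> : w = iter m par' u by apply: val_inj; rewrite val_iter Hm.
exact: fconnect_iter.
Qed.

Lemma reach' u : fconnect par' u root'.
Proof. by rewrite lemD; exact: treach. Qed.

Definition T' := RTree par'_root reach'.

Lemma card_sub (P : pred V) :
  #|[set u : V' | P (val u)]| = #|[set x | (x != v) && P x]|.
Proof.
rewrite -(card_imset _ val_inj); congr #|pred_of_set _|; apply/setP => x; rewrite inE.
apply/imsetP/andP => [[u]|[H1 H2]].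
  by rewrite inE => Hu ->; split => //; exact: (valP u).
by exists (exist _ x H1); rewrite ?inE.
Qed.

Lemma tedges' : tedges T' = tedges T - 1.
Proof.
rewrite /tedges /=.
have -> : [set u : V' | u != root'] = [set u : V' | val u != r0].
  by apply/setP => u; rewrite !inE -(inj_eq val_inj).
rewrite (card_sub (fun x => x != r0)).
have -> : [set x | (x != v) && (x != r0)] = [set x | x != troot T] :\ v.
  by apply/setP => x; rewrite !inE.
by rewrite [#|[set x | x != troot T]|](cardsD1 v) inE hv add1n subn1.
Qed.

Lemma tstar' X : tstar_edges T' f' X = tstar_edges T f X - (v \in Anc T f X).
Proof.
rewrite !tstarE /Anc /=.
have -> : [set u : V' | (u != root') && [exists x in X, fconnect par' (f' x) u]]
   = [set u : V' | (val u != r0) && [exists x in X, fconnect p (f x) (val u)]].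
  apply/setP => u; rewrite !inE -(inj_eq val_inj) /=; congr (_ && _).
  apply: eq_existsb => x; rewrite lemD /= -lemC //; exact: (valP u).
rewrite (card_sub (fun y => (y != r0) && [exists x in X, fconnect p (f x) y])).
rewrite [X in _ = X - _](cardsD1 v) addKn.
by congr #|pred_of_set _|; apply/setP => x; rewrite !inE.
Qed.

Lemma tdepth' : tdepth T' <= tdepth T.
Proof.
rewrite /tdepth; apply/bigmax_leqP => u _.
apply: (@leq_trans (tdist T (val u))); last exact: leq_bigmax.
rewrite /tdist /=.
have [m Hm Hi] := lemA (valP u) (iter_findex (treach T (val u))) r0_neq.
apply: leq_trans Hm; apply: findex_le; apply: val_inj; by rewrite val_iter.
Qed.

End Contract.

From mathcomp Require Import zify.

Lemma contract_vertex (E V : finType) (T : rtree V) (f : E -> V) v :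
  v != troot T ->
  exists (V' : finType) (T' : rtree V') (f' : E -> V'),
    [/\ tedges T' = tedges T - 1, tdepth T' <= tdepth T &
    forall X, tstar_edges T' f' X = tstar_edges T f X - (v \in Anc T f X)].
Proof.
move=> hv; exists (V' v), (T' hv), (f' f hv); split.
- exact: tedges'.
- exact: tdepth'.
- exact: tstar'.
Qed.

Lemma root_nonzero (E V : finType) (T : rtree V) (f : E -> V) (r : {set E} -> nat) e :
  0 < r [set e] -> r [set e] <= tstar_edges T f [set e] -> f e != troot T.
Proof.
move=> H1 H2; apply/eqP => He; move: H2.
suff -> : tstar_edges T f [set e] = 0 by rewrite leqn0 => /eqP H; rewrite H in H1.
rewrite tstarE; apply/eqP; rewrite cards_eq0; apply/eqP/setP => u; rewrite !inE.
apply/negbTE/negP => /andP[Hu /existsP[x /andP[]]]; rewrite inE => /eqP -> .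
rewrite He => /iter_findex; rewrite iter_fix_root => Hr.
by rewrite Hr eqxx in Hu.
Qed.

Lemma anc_absorb (E V : finType) (T : rtree V) (f : E -> V) e X :
  f e \in Anc T f X -> tstar_edges T f (e |: X) = tstar_edges T f X.
Proof.
move=> H; rewrite !tstarE; congr #|pred_of_set _|; apply/setP => u; rewrite !inE.
case: (u != _) => //=.
apply/existsP/existsP => [[x /andP[Hx Hc]] | [x /andP[Hx Hc]]]; last first.
  by exists x; rewrite !inE Hx orbT.
move: Hx; rewrite !inE => /orP[/eqP Hxe|Hx]; last by exists x; rewrite Hx.
move: H; rewrite inE => /andP[_ /existsP[y /andP[Hy Hyc]]].
exists y; rewrite Hy /=; apply: connect_trans Hyc _; by rewrite -Hxe.
Qed.

Definition DD (E : finType) (r : {set E} -> nat) (S : {set E}) (k : nat) :=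
  exists (V : finType) (T : rtree V) (f : E -> V),
    [/\ r S = tedges T, (forall X : {set E}, X \subset S -> r X <= tstar_edges T f X) &
       tdepth T <= k].

Lemma DD_ext (E : finType) (r1 r2 : {set E} -> nat) (S : {set E}) k :
  (forall X : {set E}, X \subset S -> r1 X = r2 X) -> DD r1 S k -> DD r2 S k.
Proof.
move=> H [V [T [f [H1 H2 H3]]]]; exists V, T, f; split => //.
  by rewrite -(H S (subxx _)).
by move=> X HX; rewrite -(H X HX); exact: H2.
Qed.

Lemma del_step (E : finType) (r : {set E} -> nat) (S : {set E}) k e : e \in S -> DD r S k ->
  r (S :\ e) <= r S -> r S <= (r (S :\ e)).+1 ->
  (r (S :\ e) < r S -> forall X : {set E}, X \subset S :\ e -> (r X).+1 <= r (e |: X)) ->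
  DD r (S :\ e) k.
Proof.
move=> He [V [T [f [H1 H2 H3]]]] H0 Hle Hcol.
case: (ltnP (r (S :\ e)) (r S)) => Hlt; last first.
  exists V, T, f; split => //; first by rewrite -H1; apply/eqP; rewrite eqn_leq H0 Hlt.
  by move=> X HX; apply: H2; apply: subset_trans HX (subD1set _ _).
have Hc := Hcol Hlt.
have He1 : 0 < r [set e] by have := Hc set0 (sub0set _); rewrite setU0; lia.
have Hv := root_nonzero He1 (H2 _ (eq_ind_r _ He (sub1set _ _))).
have [V' [T' [f' [E1 E2 E3]]]] := contract_vertex f Hv.
exists V', T', f'; split.
- rewrite E1 -H1; lia.
- move=> X HX; rewrite E3.
  have HeX : e |: X \subset S by rewrite subUset sub1set He (subset_trans HX (subD1set _ _)).
  case: (boolP (f e \in Anc T f X)) => Hin.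
    have := Hc X HX; have := H2 (e |: X) HeX; rewrite (anc_absorb Hin); lia.
  by rewrite subn0; apply: H2; apply: subset_trans HX (subD1set _ _).
- exact: leq_trans E2 H3.
Qed.

Lemma con_step (E : finType) (r r' : {set E} -> nat) (S : {set E}) k e : e \in S -> DD r S k ->
  r [set e] <= 1 ->
  (forall X : {set E}, X \subset S :\ e -> r' X = r (e |: X) - r [set e] /\ r (e |: X) <= r X + r [set e]) ->
  DD r' (S :\ e) k.
Proof.
move=> He [V [T [f [H1 H2 H3]]]] He1 Hr.
have HSe := Hr _ (subxx (S :\ e)); rewrite setD1K // in HSe.
have HeX (X : {set E}) : X \subset S :\ e -> e |: X \subset S.
  by move=> HX; rewrite subUset sub1set He (subset_trans HX (subD1set _ _)).
have HXS (X : {set E}) : X \subset S :\ e -> X \subset S.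
  by move=> HX; apply: subset_trans HX (subD1set _ _).
case: (posnP (r [set e])) => Hz.
  exists V, T, f; split => //; first by rewrite -H1; case: HSe; rewrite Hz; lia.
  move=> X HX; have [A B] := Hr X HX; have := H2 X (HXS X HX); lia.
have Hv := root_nonzero Hz (H2 _ (eq_ind_r _ He (sub1set _ _))).
have [V' [T' [f' [E1 E2 E3]]]] := contract_vertex f Hv.
exists V', T', f'; split.
- rewrite E1 -H1; case: HSe; lia.
- move=> X HX; rewrite E3; have [A B] := Hr X HX.
  case: (boolP (f e \in Anc T f X)) => Hin.
    have := H2 (e |: X) (HeX X HX); rewrite (anc_absorb Hin); lia.
  have := H2 X (HXS X HX); lia.
- exact: leq_trans E2 H3.
Qed.

Lemma arith a b c d i : a <= c -> a <= b -> b <= d -> a <= i -> d + i <= c + b ->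
  d - b = (d - a) - (b - a) /\ d - a <= (c - a) + (b - a).
Proof. lia. Qed.

Ltac sets := apply/setP => ?; rewrite !inE;
  repeat match goal with |- context [?z \in ?A] => case: (z \in A) end;
  repeat match goal with |- context [?z == ?a] => case: (z == a) end.

Theorem proposition3p3 (E : finType) (M M' : matroid E) :
  is_minor M' M -> bd M' <= bd M.
Proof.
move=> [Hsub [C [HC Hrk]]].
set r := rk M; set G := ground M; set S1 := ground M' :|: C.
have HCG : C \subset G by apply: subset_trans HC (subsetDl _ _).
have HS1 : S1 \subset G by rewrite subUset Hsub HCG.
have mono (X Y : {set E}) : Y \subset G -> X \subset Y -> r X <= r Y by exact: rk_mono.
have subm (X Y : {set E}) : X \subset G -> Y \subset G -> r (X :|: Y) + r (X :&: Y) <= r X + r Y.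
  exact: rk_submod.
have r1 e : e \in G -> r [set e] <= 1.
  by move=> He; have := rk_card (eq_ind_r _ He (sub1set _ _)) ; rewrite cards1.
have r0 : r set0 = 0 by apply/eqP; rewrite -leqn0 -(cards0 E); apply: rk_card; exact: sub0set.
rewrite {2}/bd; case: ex_minnP => k /asboolP [V [T [f [[H1 H2] H3]]]] _.
have D0 : DD r G k by exists V, T, f; split => //; rewrite H3.
have Del : forall n (S : {set E}), S1 \subset S -> S \subset G -> #|S :\: S1| = n ->
    DD r S k -> DD r S1 k.
  elim => [|n IH] S HS1S HSG Hn HD.
    have -> : S1 = S; last exact: HD.
    apply/eqP; rewrite eqEsubset HS1S /=.
    by move/eqP: Hn; rewrite cards_eq0 setD_eq0.
  have [e He] : exists e, e \in S :\: S1.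
    by apply/set0Pn; rewrite -card_gt0 Hn.
  move: (He); rewrite inE => /andP[HeS1 HeS].
  have HSeG : S :\ e \subset G by apply: subset_trans (subD1set _ _) HSG.
  apply: (IH (S :\ e)) => //.
  - apply/subsetP => y Hy; rewrite !inE (subsetP HS1S _ Hy) andbT.
    by apply/eqP => Hye; rewrite -Hye Hy in HeS1.
  - have -> : (S :\ e) :\: S1 = (S :\: S1) :\ e.
      by sets.
    by rewrite [#|S :\: S1|](cardsD1 e) He in Hn; case: Hn.
  have HU : (S :\ e) :|: [set e] = S by rewrite setUC setD1K.
  apply: del_step => //.
  - exact: mono (subD1set _ _).
  - have := subm (S :\ e) [set e] HSeG (eq_ind_r _ (subsetP HSG _ HeS) (sub1set _ _)).
    rewrite HU; have := r1 e (subsetP HSG _ HeS); lia.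
  - move=> Hlt X HX.
    have HXG : e |: X \subset G.
      by rewrite subUset sub1set (subsetP HSG _ HeS) (subset_trans HX HSeG).
    have := subm (e |: X) (S :\ e) HXG HSeG.
    have -> : (e |: X) :|: (S :\ e) = S.
      apply/setP => y; rewrite !inE; case: (eqVneq y e) => [->|//]; first by rewrite HeS.
      by rewrite /=; case: (boolP (y \in X)) => // /(subsetP HX); rewrite !inE => /andP[_ ->].
    have -> : (e |: X) :&: (S :\ e) = X.
      apply/setP => y; rewrite !inE; case: (boolP (y \in X)) => Hy.
        by move: (subsetP HX _ Hy); rewrite !inE => /andP[-> ->]; rewrite orbT.
      by rewrite orbF; case: (y == e).
    lia.
have D1 : DD r S1 k.
  by apply: (Del _ G) => //; exact: subxx.
pose rho (C0 : {set E}) (X : {set E}) := r (X :|: C0) - r C0.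
have Con : forall n (C0 : {set E}), C0 \subset C -> #|C :\: C0| = n ->
    DD (rho C0) (S1 :\: C0) k -> DD (rho C) (S1 :\: C) k.
  elim => [|n IH] C0 HC0 Hn HD.
    have -> : C = C0; last exact: HD.
    apply/eqP; rewrite eqEsubset HC0 andbT.
    by move/eqP: Hn; rewrite cards_eq0 setD_eq0.
  have [e He] : exists e, e \in C :\: C0.
    by apply/set0Pn; rewrite -card_gt0 Hn.
  move: (He); rewrite inE => /andP[HeC0 HeC].
  have HeG : e \in G by exact: subsetP HCG _ HeC.
  have HC0G : C0 \subset G by exact: subset_trans HC0 HCG.
  have HeC0G : e |: C0 \subset G by rewrite subUset sub1set HeG HC0G.
  apply: (IH (e |: C0)).
  - by rewrite subUset sub1set HeC HC0.
  - have -> : C :\: (e |: C0) = (C :\: C0) :\ e.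
      by sets.
    by rewrite [#|C :\: C0|](cardsD1 e) He in Hn; case: Hn.
  have -> : S1 :\: (e |: C0) = (S1 :\: C0) :\ e.
    by sets.
  apply: con_step HD _ _.
  - by rewrite in_setD HeC0 /S1 in_setU HeC orbT.
  - rewrite /rho; have := r1 e HeG.
    have := subm C0 [set e] HC0G (eq_ind_r _ HeG (sub1set _ _)).
    rewrite setUC; have := rk_card (eq_ind_r _ HeG (sub1set _ _)); rewrite cards1.
    rewrite -/r; lia.
  - move=> X HX.
    have HXG : X \subset G.
      apply: subset_trans HX _; apply: subset_trans (subD1set _ _) _.
      by apply: subset_trans (subsetDl _ _) HS1.
    have HXC0 : X :|: C0 \subset G by rewrite subUset HXG HC0G.
    have HXeC0 : X :|: (e |: C0) \subset G by rewrite subUset HXG HeC0G.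
    rewrite /rho.
    have -> : (e |: X) :|: C0 = X :|: (e |: C0).
      by sets.
    have Ha1 := mono C0 (X :|: C0) HXC0 (subsetUr _ _).
    have Ha2 := mono C0 (e |: C0) HeC0G (subsetUr _ _).
    have Ha3 := mono (e |: C0) (X :|: (e |: C0)) HXeC0 (subsetUr _ _).
    have Hs := subm (X :|: C0) (e |: C0) HXC0 HeC0G.
    have HU : (X :|: C0) :|: (e |: C0) = X :|: (e |: C0) by sets.
    rewrite HU in Hs.
    have Ha4 : r C0 <= r ((X :|: C0) :&: (e |: C0)).
      apply: mono; first by apply: subset_trans (subsetIl _ _) HXC0.
      by rewrite subsetI subsetUr subsetUr.
    exact: arith Ha1 Ha2 Ha3 Ha4 Hs.
have D2 : DD (rho C) (S1 :\: C) k.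
  apply: (Con #|C| set0); first exact: sub0set.
    by rewrite setD0.
  rewrite setD0; apply: DD_ext D1 => X _; by rewrite /rho setU0 r0 subn0.
have HS1C : S1 :\: C = ground M'.
  apply/setP => y; rewrite !inE; case: (boolP (y \in C)) => Hy /=.
    by move: (subsetP HC _ Hy); rewrite !inE => /andP[/negbTE ->].
  by rewrite orbF.
rewrite HS1C in D2.
have [V2 [T2 [f2 [E1 E2 E3]]]] : DD (rk M') (ground M') k.
  apply: DD_ext D2 => X HX; by rewrite Hrk.
rewrite /bd; case: ex_minnP => k' _ Hmin.
apply: leq_trans (Hmin (tdepth T2) _) E3.
apply/asboolP; exists V2, T2, f2; split => //; split => //.
Qed.
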